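(* Let $\mathbb{H}$ be one of $\mathbb{Z}$, $\mathbb{N}$, $\mathbb{N}^+$. Every upper quasi-density $\mu^\ast$ on $\mathbb{H}$ has the strong Darboux property: for all $X,Y\subseteq\mathbb{H}$ with $X\subseteq Y$ and every real $a$ with $\mu^\ast(X)\le a\le \mu^\ast(Y)$, there exists $A$ with $X\subseteq A\subseteq Y$ and $\mu^\ast(A)=a$. In particular, this holds for every upper density on $\mathbb{H}$.
   Context: $\mathbb{N}=\{0,1,2,\dots\}$, $\mathbb{N}^+=\{1,2,\dots\}$. $\mathbb{H}$ denotes one of $\mathbb{Z}$, $\mathbb{N}$, $\mathbb{N}^+$. For $X\subseteq\mathbb{H}$, $k\in\mathbb{N}^+$, $h\in\mathbb{N}$, write $k\cdot X+h:=\{kx+h: x\in X\}$. An upper quasi-density on $\mathbb{H}$ is a function $\mu^\ast:\mathcal{P}(\mathbb{H})\to\mathbb{R}$ such that: (i) $\mu^\ast(\mathbb{H})=1$; (ii) $\mu^\ast(X)\le 1$ for all $X\subseteq\mathbb{H}$; (iii) $\mu^\ast(X\cup Y)\le\mu^\ast(X)+\mu^\ast(Y)$ for all $X,Y\subseteq\mathbb{H}$; (iv) $\mu^\ast(k\cdot X+h)=\frac1k\mu^\ast(X)$ for all $X\subseteq\mathbb{H}$ and $h,k\in\mathbb{N}^+$. An upper density is an upper quasi-density that is moreover monotone ($X\subseteq Y\Rightarrow \mu^\ast(X)\le\mu^\ast(Y)$). A function $f:\mathcal{P}(S)\to\mathbb{R}$ has the strong Darboux property if for all $X\subseteq Y\subseteq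 S$ and every $a\in[f(X),f(Y)]$ there is $A$ with $X\subseteq A\subseteq Y$ and $f(A)=a$ (if $f(Y)<f(X)$ the interval is empty and the condition is vacuous). *)

(* Defs.v *)
From Stdlib Require Import Reals ZArith.
Open Scope R_scope.

Inductive HKind : Type := HZ | HN | HNpos.

Definition inH (K : HKind) (z : Z) : Prop :=
  match K with
  | HZ => True
  | HN => (0 <= z)%Z
  | HNpos => (1 <= z)%Z
  end.

Definition carrier (K : HKind) : Type := { z : Z | inH K z }.

Definition fullset {S : Type} : S -> Prop := fun _ => True.
Definition setU {S : Type} (X Y : S -> Prop) : S -> Prop := fun x => X x \/ Y x.
Definition subset {S : Type} (X Y : S -> Prop) : Prop := forall x, X x -> Y x.

Definition affine_image {K : HKind} (k h : Z) (X : carrier K -> Prop) : carrier K -> Prop :=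
  fun y => exists x, X x /\ proj1_sig y = (k * proj1_sig x + h)%Z.

Definition upper_quasi_density (K : HKind) (mu : (carrier K -> Prop) -> R) : Prop :=
  mu fullset = 1 /\
  (forall X, mu X <= 1) /\
  (forall X Y, mu (setU X Y) <= mu X + mu Y) /\
  (forall X (k h : Z), (1 <= k)%Z -> (1 <= h)%Z ->
      mu (affine_image k h X) = / IZR k * mu X).

Definition upper_density (K : HKind) (mu : (carrier K -> Prop) -> R) : Prop :=
  upper_quasi_density K mu /\ (forall X Y, subset X Y -> mu X <= mu Y).

Definition strong_darboux {S : Type} (f : (S -> Prop) -> R) : Prop :=
  forall X Y, subset X Y -> forall a, f X <= a <= f Y ->
    exists A, subset X A /\ subset A Y /\ f A = a.

(* Main.v *)
Require Import Defs.
From Stdlib Require Import Reals ZArith.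
From Stdlib Require Import Lia Lra Psatz FunctionalExtensionality PropExtensionality ProofIrrelevance Classical.
Open Scope R_scope.

Lemma set_ext {S : Type} (A B : S -> Prop) : (forall x, A x <-> B x) -> A = B.
Proof. intros H; apply functional_extensionality; intros x; apply propositional_extensionality; apply H. Qed.

Lemma val_inj {K} (x y : carrier K) : proj1_sig x = proj1_sig y -> x = y.
Proof. destruct x as [x px], y as [y py]; simpl; intros E; subst; f_equal; apply proof_irrelevance. Qed.

Definition single {K} (p : Z) : carrier K -> Prop := fun y => proj1_sig y = p.
Definition cls {K} (m r : Z) : carrier K -> Prop := fun y => exists q, proj1_sig y = (m*q + r)%Z.

Lemma one_in (K : HKind) : inH K 1. Proof. destruct K; simpl; lia. Qed.

Section Q.
Context (K : HKind) (mu : (carrier K -> Prop) -> R) (Hmu : upper_quasi_density K mu).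

Lemma Hsub X Y : mu (setU X Y) <= mu X + mu Y.
Proof. destruct Hmu as [_ [_ [H _]]]; apply H. Qed.
Lemma Hle1 X : mu X <= 1.
Proof. destruct Hmu as [_ [H _]]; apply H. Qed.
Lemma Haff X k h : (1 <= k)%Z -> (1 <= h)%Z -> mu (affine_image k h X) = / IZR k * mu X.
Proof. destruct Hmu as [_ [_ [_ H]]]; apply H. Qed.

Lemma mu_empty : mu (fun _ => False) = 0.
Proof.
  assert (E : affine_image 2 1 (fun _ : carrier K => False) = (fun _ => False)).
  { apply set_ext; intros y; unfold affine_image; split; [intros [x [[] _]] | intros []]. }
  pose proof (Haff (fun _ => False) 2 1 ltac:(lia) ltac:(lia)) as H. rewrite E in H. lra.
Qed.

Lemma aff_single k h p : (exists x : carrier K, proj1_sig x = p) ->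
  affine_image k h (@single K p) = @single K (k*p+h)%Z.
Proof.
  intros [x0 Hx0]. apply set_ext; intro y; unfold affine_image, single; split.
  - intros [x [Hx Hy]]. rewrite Hy, Hx. reflexivity.
  - intros Hy. exists x0. split; [assumption| rewrite Hy, Hx0; reflexivity].
Qed.

Lemma mu_single1 : mu (@single K 1%Z) = 0.
Proof.
  assert (Ho : exists x : carrier K, proj1_sig x = 1%Z) by (exists (exist _ 1%Z (one_in K)); reflexivity).
  pose proof (Haff (@single K 1%Z) 1 2 ltac:(lia) ltac:(lia)) as H1.
  pose proof (Haff (@single K 1%Z) 2 1 ltac:(lia) ltac:(lia)) as H2.
  rewrite aff_single in H1 by exact Ho. rewrite aff_single in H2 by exact Ho.
  change (1*1+2)%Z with 3%Z in H1. change (2*1+1)%Z with 3%Z in H2.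
  rewrite H1 in H2. lra.
Qed.

Lemma mu_single p : mu (@single K p) = 0.
Proof.
  destruct (classic (exists x : carrier K, proj1_sig x = p)) as [Hp|Hp].
  - assert (Ho : exists x : carrier K, proj1_sig x = 1%Z) by (exists (exist _ 1%Z (one_in K)); reflexivity).
    destruct (Z.lt_trichotomy p 1) as [Hl|[He|Hg]].
    + pose proof (Haff (@single K p) 1 (1-p) ltac:(lia) ltac:(lia)) as H1.
      rewrite aff_single in H1 by exact Hp.
      replace (1*p+(1-p))%Z with 1%Z in H1 by ring. rewrite mu_single1 in H1. lra.
    + subst; apply mu_single1.
    + pose proof (Haff (@single K 1%Z) 1 (p-1) ltac:(lia) ltac:(lia)) as H1.
      rewrite aff_single in H1 by exact Ho.
      replace (1*1+(p-1))%Z with p in H1 by ring. rewrite mu_single1 in H1. lra.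
  - replace (single p) with (fun _ : carrier K => False). apply mu_empty.
    apply set_ext; intros y; unfold single; split; [intros []|intros E; apply Hp; eauto].
Qed.

Lemma mu_sub_single T p : subset T (single p) -> mu T = 0.
Proof.
  intros HT. destruct (classic (exists y, T y)) as [[y Ty]|N].
  - replace T with (@single K p). apply mu_single.
    apply set_ext; intros x; split; [|apply HT].
    intros Hx. replace x with y; auto. apply val_inj. rewrite (HT y Ty). symmetry; exact Hx.
  - replace T with (fun _ : carrier K => False). apply mu_empty.
    apply set_ext; intros x; split; [intros []|intros Hx; apply N; eauto].
Qed.

Lemma mu_sub_pair T p q : subset T (setU (single p) (single q)) -> mu T <= 0.
Proof.
  intros HT.
  replace T with (setU (fun y => T y /\ single p y) (fun y => T y /\ single q y)).
  - eapply Rle_trans; [apply Hsub|].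
    rewrite (mu_sub_single _ p), (mu_sub_single _ q); [lra| |]; intros y [_ Hy]; exact Hy.
  - apply set_ext; intros y; unfold setU; split; [intros [[Hy _]|[Hy _]]; exact Hy|].
    intros Hy; destruct (HT y Hy); [left|right]; auto.
Qed.

Lemma mu_rep (k h : Z) (Hk : (1 <= k)%Z) (Hh : (1 <= h)%Z) W :
  (forall w, W w -> exists x : carrier K, proj1_sig w = (k * proj1_sig x + h)%Z) -> mu W <= / IZR k.
Proof.
  intros HW.
  set (W' := fun x : carrier K => exists w, W w /\ proj1_sig w = (k * proj1_sig x + h)%Z).
  assert (E : affine_image k h W' = W).
  { apply set_ext; intros y; unfold affine_image, W'; split.
    - intros [x [[w [Hw Hwv]] Hy]]. replace y with w; auto. apply val_inj. congruence.
    - intros Hy. destruct (HW y Hy) as [x Hx]. exists x. split; auto. exists y; auto. }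
  rewrite <- E, Haff by assumption.
  assert (Hk' : 1 <= IZR k) by (apply IZR_le; lia).
  assert (0 < / IZR k) by (apply Rinv_0_lt_compat; lra).
  pose proof (Hle1 W'). nra.
Qed.

Lemma thin (m r : Z) (Hm : (1 <= m)%Z) (Hr : (0 <= r < m)%Z) W :
  subset W (cls m r) -> mu W <= / IZR m.
Proof.
  intros HW.
  set (P := fun y : carrier K => exists q, proj1_sig y = (m*q+r)%Z /\ inH K (q-1)).
  replace W with (setU (fun y => W y /\ P y) (fun y => W y /\ ~ P y)).
  2:{ apply set_ext; intros y; unfold setU; split; [intros [[Hy _]|[Hy _]]; exact Hy|].
      intros Hy; destruct (classic (P y)); auto. }
  eapply Rle_trans; [apply Hsub|].
  assert (H1 : mu (fun y => W y /\ P y) <= / IZR m).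
  { apply (mu_rep m (r+m)); [lia|lia|].
    intros w [_ [q [Hq Hi]]]. exists (exist _ (q-1)%Z Hi). simpl. rewrite Hq; ring. }
  assert (H2 : mu (fun y => W y /\ ~ P y) <= 0).
  { apply (mu_sub_pair _ r (r+m)). intros y [Hy HnP].
    destruct (HW y Hy) as [q Hq].
    assert (Hi : ~ inH K (q-1)) by (intros Hi; apply HnP; exists q; auto).
    pose proof (proj2_sig y) as Hy'. simpl in Hy'. rewrite Hq in Hy'.
    assert (Hq01 : q = 0%Z \/ q = 1%Z) by (destruct K; simpl in *; [exfalso; auto | nia | nia]).
    unfold setU, single. rewrite Hq. destruct Hq01; subst; [left|right]; ring. }
  lra.
Qed.

End Q.

Definition mm (n : nat) : Z := (2 ^ Z.of_nat n)%Z.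

Lemma mm_S n : mm (S n) = (2 * mm n)%Z.
Proof. unfold mm. rewrite Nat2Z.inj_succ, Z.pow_succ_r; lia. Qed.
Lemma mm_ge1 n : (1 <= mm n)%Z.
Proof. unfold mm. pose proof (Z.pow_pos_nonneg 2 (Z.of_nat n) ltac:(lia) ltac:(lia)). lia. Qed.
Lemma mm_gt n : (Z.of_nat n < mm n)%Z.
Proof. unfold mm. apply Z.pow_gt_lin_r; lia. Qed.

Lemma cls_sub1 {K} m r : subset (@cls K (2*m) r) (cls m r).
Proof. intros y [q Hq]. exists (2*q)%Z. rewrite Hq; ring. Qed.
Lemma cls_sub2 {K} m r : subset (@cls K (2*m) (r+m)) (cls m r).
Proof. intros y [q Hq]. exists (2*q+1)%Z. rewrite Hq; ring. Qed.
Lemma cls_split {K} m r y : @cls K m r y -> cls (2*m) r y \/ cls (2*m) (r+m) y.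
Proof.
  intros [q Hq]. destruct (Z.Even_or_Odd q) as [[q' E]|[q' E]]; subst q;
  [left|right]; exists q'; rewrite Hq; ring.
Qed.

Definition Yc {K} (Y : carrier K -> Prop) m r : carrier K -> Prop := fun y => Y y /\ cls m r y.

Fixpoint st K (mu : (carrier K -> Prop) -> R) X Y a (n : nat) : (carrier K -> Prop) * Z :=
  match n with
  | O => (X, 0%Z)
  | S n' => let p := st K mu X Y a n' in
      let S' := setU (fst p) (Yc Y (2 * mm n') (snd p)) in
      if Rle_dec (mu S') a then (S', (snd p + mm n')%Z) else (fst p, snd p)
  end.

Definition Tset K mu X Y a n :=
  setU (fst (st K mu X Y a n)) (Yc Y (mm n) (snd (st K mu X Y a n))).

Lemma small_le x : (forall n, x <= / IZR (mm n)) -> x <= 0.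
Proof.
  intros H. destruct (Rle_dec x 0) as [|Hx]; auto. exfalso.
  apply Rnot_le_lt in Hx.
  destruct (archimed (/ x)) as [Ha _].
  assert (Hix : 0 < / x) by (apply Rinv_0_lt_compat; lra).
  assert (Hup : (0 <= up (/x))%Z).
  { apply le_IZR. lra. }
  pose (n := Z.to_nat (up (/ x))).
  pose proof (mm_gt n) as Hg. unfold n in Hg. rewrite Z2Nat.id in Hg by lia.
  apply IZR_lt in Hg.
  specialize (H n).
  assert (/ IZR (mm n) < x).
  { rewrite <- (Rinv_inv x). apply Rinv_lt_contravar.
    - apply Rmult_lt_0_compat; [lra|]. unfold n; lra.
    - unfold n; lra. }
  lra.
Qed.

Section C.
Context (K : HKind) (mu : (carrier K -> Prop) -> R) (Hmu : upper_quasi_density K mu)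
  (X Y : carrier K -> Prop) (HXY : subset X Y) (a : R) (Ha1 : mu X <= a) (Ha2 : a <= mu Y).

Notation S_ n := (fst (st K mu X Y a n)).
Notation r_ n := (snd (st K mu X Y a n)).
Notation T_ n := (Tset K mu X Y a n).

Lemma S_mono n : subset (S_ n) (S_ (S n)).
Proof. intros y Hy. cbn [st]. destruct (Rle_dec _ a); simpl; [left|]; auto. Qed.

Lemma T_mono n : subset (T_ (S n)) (T_ n).
Proof.
  unfold Tset. cbn [st]. set (Sn := S_ n). set (rn := r_ n).
  assert (Hm := mm_S n).
  intros y Hy. destruct (Rle_dec _ a); simpl in Hy.
  - destruct Hy as [[H|[H1 H2]]|[H1 H2]]; [left; auto|right; split; auto|right; split; auto].
    + apply cls_sub1; auto.
    + rewrite Hm in H2. apply cls_sub2; auto.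
  - destruct Hy as [H|[H1 H2]]; [left; auto|right; split; auto].
    rewrite Hm in H2. apply cls_sub1; auto.
Qed.

Lemma inv n : subset X (S_ n) /\ subset (S_ n) Y /\ mu (S_ n) <= a /\ a <= mu (T_ n)
  /\ (0 <= r_ n < mm n)%Z.
Proof.
  induction n as [|n IH].
  - unfold Tset. cbn [st fst snd].
    assert (ET : setU X (Yc Y (mm 0) 0) = Y).
    { apply set_ext; intros y; unfold setU, Yc; split.
      - intros [H|[H _]]; auto.
      - intros H; right; split; auto. exists (proj1_sig y). unfold mm; simpl Z.of_nat; rewrite Z.pow_0_r; ring. }
    rewrite ET. unfold mm at 1; simpl Z.pow.
    repeat split; try (intros y Hy; auto); try lra; try lia.
  - destruct IH as [I1 [I2 [I3 [I4 I5]]]].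
    unfold Tset in *. cbn [st].
    set (Sn := S_ n) in *. set (rn := r_ n) in *.
    assert (Hm := mm_S n).
    assert (Hm1 := mm_ge1 n).
    destruct (Rle_dec (mu (setU Sn (Yc Y (2 * mm n) rn))) a) as [Hle|Hgt]; cbn [fst snd].
    + assert (ET : setU (setU Sn (Yc Y (2 * mm n) rn)) (Yc Y (mm (S n)) (rn + mm n)) =
                   setU Sn (Yc Y (mm n) rn)).
      { rewrite Hm. apply set_ext; intros y; unfold setU, Yc; split.
        - intros [[H|[H1 H2]]|[H1 H2]]; auto; right; split; auto;
            [apply cls_sub1|apply cls_sub2]; auto.
        - intros [H|[H1 H2]]; auto. destruct (cls_split _ _ _ H2); [left;right|right]; auto. }
      repeat split.
      * intros y Hy; left; auto.
      * intros y [H|[H _]]; auto.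
      * exact Hle.
      * rewrite ET; exact I4.
      * lia.
      * lia.
    + repeat split.
      * auto.
      * auto.
      * auto.
      * rewrite Hm. lra.
      * lia.
      * lia.
Qed.
Definition AA : carrier K -> Prop := fun y => exists n, S_ n y.

Lemma S_mono_le n n' : (n <= n')%nat -> subset (S_ n) (S_ n').
Proof. induction 1; [intros y; auto|intros y Hy; apply S_mono; auto]. Qed.
Lemma T_mono_le n n' : (n <= n')%nat -> subset (T_ n') (T_ n).
Proof. induction 1; [intros y; auto|intros y Hy; apply IHle, T_mono; auto]. Qed.

Lemma A_T n : subset AA (T_ n).
Proof.
  intros y [k Hk]. destruct (Nat.le_ge_cases k n) as [H|H].
  - left. apply (S_mono_le k n H); auto.
  - apply (T_mono_le n k H). left; auto.
Qed.

Lemma diff_cls n y : T_ n y -> ~ S_ n y -> cls (mm n) (r_ n) y.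
Proof. intros [H|[_ H]] Hn; [contradiction|exact H]. Qed.

Lemma A_prop : subset X AA /\ subset AA Y /\ mu AA = a.
Proof.
  split; [intros y Hy; exists 0%nat; exact Hy|].
  split; [intros y [k Hk]; exact (proj1 (proj2 (inv k)) y Hk)|].
  assert (B1 : forall n, mu AA - a <= / IZR (mm n)).
  { intros n. destruct (inv n) as [_ [_ [I3 [_ I5]]]].
    replace AA with (setU (S_ n) (fun y => AA y /\ ~ S_ n y)).
    2:{ apply set_ext; intros y; unfold setU; split.
        - intros [H|[H _]]; auto. exists n; auto.
        - intros H; destruct (classic (S_ n y)); auto. }
    pose proof (Hsub K mu Hmu (S_ n) (fun y => AA y /\ ~ S_ n y)).
    assert (mu (fun y => AA y /\ ~ S_ n y) <= / IZR (mm n)).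
    { apply (thin K mu Hmu (mm n) (r_ n) (mm_ge1 n) I5).
      intros y [Hy Hn]. apply diff_cls; auto. apply A_T; auto. }
    (* careful: the replace also rewrote the goal's AA *)
    lra. }
  assert (B2 : forall n, a - mu AA <= / IZR (mm n)).
  { intros n. destruct (inv n) as [_ [_ [_ [I4 I5]]]].
    assert (E : T_ n = setU AA (fun y => T_ n y /\ ~ AA y)).
    { apply set_ext; intros y; unfold setU; split.
      - intros H; destruct (classic (AA y)); auto.
      - intros [H|[H _]]; auto. apply A_T; auto. }
    rewrite E in I4.
    pose proof (Hsub K mu Hmu AA (fun y => T_ n y /\ ~ AA y)).
    assert (mu (fun y => T_ n y /\ ~ AA y) <= / IZR (mm n)).
    { apply (thin K mu Hmu (mm n) (r_ n) (mm_ge1 n) I5).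
      intros y [Hy Hn]. apply diff_cls; auto. intros Hs; apply Hn; exists n; auto. }
    lra. }
  apply small_le in B1. apply small_le in B2. lra.
Qed.
End C.

Theorem mainTheorem1 :
  (forall (K : HKind) (mu : (carrier K -> Prop) -> R),
      upper_quasi_density K mu -> strong_darboux mu) /\
  (forall (K : HKind) (mu : (carrier K -> Prop) -> R),
      upper_density K mu -> strong_darboux mu).
Proof.
  assert (P : forall (K : HKind) (mu : (carrier K -> Prop) -> R),
      upper_quasi_density K mu -> strong_darboux mu).
  { intros K mu Hmu X Y HXY a [Ha1 Ha2].
    exists (AA K mu X Y a). apply A_prop; auto. }
  split; auto. intros K mu [Hq _]. apply P; auto.
Qed.
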